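(* For every $k\ge1$ and every word $\gamma_1\gamma_2\cdots\gamma_k\in\{A,B,C\}^k$ there is a continuous function $f_{\gamma_1\cdots\gamma_k}:T\to[0,1]$, independent of $Q$ and $\alpha$, such that for every integer $Q\ge2$ and every irrational $\alpha\in(0,1)$, with $q_1,q_2$ the denominators of the consecutive Farey fractions $a_1/q_1<\alpha<a_2/q_2$ of order $Q-1$, \[ \frac{\#\{\Gamma\in G_{Q,k}(\alpha):\ \Gamma=\gamma_1\gamma_2\cdots\gamma_k\}}{Q}=f_{\gamma_1\cdots\gamma_k}\!\left(\frac{q_1}{Q},\frac{q_2}{Q}\right). \] For $k=1$ one has $f_A(x,y)=1-x$, $f_B(x,y)=1-y$, $f_C(x,y)=x+y-1$.
   Context: $T=\{(x,y): x\le1,\ y\le1,\ x+y\ge1\}$. For irrational $\alpha$, $S_Q(\alpha)$ is the set $\{n\alpha\}$, $0\le n<Q$, on the circle $[0,1]$ with $0\sim1$; its $Q$ gaps have one of three lengths $A=q_1\alpha-a_1$, $B=a_2-q_2\alpha$, $C=A+B$, where $a_1/q_1<\alpha<a_2/q_2$ are consecutive Farey fractions in $[0,1]$ with denominators $<Q$; each gap is labelled by the letter $A$, $B$ or $C$ according to its length. $G_{Q,k}(\alpha)$ is the list (with multiplicity) of the $Q$ words $\gamma_1\cdots\gamma_k$ of labels of $k$ consecutive gaps of $S_Q(\alpha)$, starting at each of the $Q$ gaps in turn and wrapping around $0$. For example $G_{10,2}(\sqrt2)=\{AC,CA,AB,BA,AC,CA,AB,BA,AB,BA\}$. *)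

(* Defs.v *)
From Stdlib Require Import Reals Lra Lia Arith List ClassicalEpsilon.
Import ListNotations.
Open Scope R_scope.

Definition inT (x y : R) : Prop := x <= 1 /\ y <= 1 /\ x + y >= 1.

Definition continuous_on_T (f : R -> R -> R) : Prop :=
  forall x y, inT x y -> forall eps, eps > 0 ->
    exists delta, delta > 0 /\
      forall x' y', inT x' y' -> Rabs (x' - x) < delta -> Rabs (y' - y) < delta ->
        Rabs (f x' y' - f x y) < eps.

Definition irrational (a : R) : Prop :=
  forall (p q : Z), IZR q <> 0 -> a <> IZR p / IZR q.

(* a1/q1 < alpha < a2/q2 are consecutive (reduced) Farey fractions in [0,1]
   with denominators < Q, i.e. of order Q-1. *)
Definition farey_consec (Q : nat) (alpha : R) (a1 q1 a2 q2 : nat) : Prop :=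
  (1 <= q1 <= Q - 1)%nat /\ (1 <= q2 <= Q - 1)%nat /\
  (a1 <= q1)%nat /\ (a2 <= q2)%nat /\
  Nat.gcd a1 q1 = 1%nat /\ Nat.gcd a2 q2 = 1%nat /\
  INR a1 / INR q1 < alpha < INR a2 / INR q2 /\
  forall a q : nat, (1 <= q <= Q - 1)%nat ->
    ~ (INR a1 / INR q1 < INR a / INR q < INR a2 / INR q2).

Inductive letter := LA | LB | LC.

Definition letter_len (alpha : R) (a1 q1 a2 q2 : nat) (l : letter) : R :=
  match l with
  | LA => INR q1 * alpha - INR a1
  | LB => INR a2 - INR q2 * alpha
  | LC => (INR q1 * alpha - INR a1) + (INR a2 - INR q2 * alpha)
  end.

Definition fwd (alpha : R) (n m : nat) : R := frac_part ((INR m - INR n) * alpha).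

(* {m alpha} is the point of S_Q(alpha) immediately following {n alpha}
   (going around the circle); the gap starting at {n alpha} has length fwd n m. *)
Definition next_pt (alpha : R) (Q n m : nat) : Prop :=
  (m < Q)%nat /\ m <> n /\
  forall m', (m' < Q)%nat -> m' <> n -> fwd alpha n m <= fwd alpha n m'.

(* The word of labels of the k = length w consecutive gaps starting at the
   gap beginning at {n alpha} equals w. *)
Definition word_at (alpha : R) (Q a1 q1 a2 q2 : nat) (w : list letter) (n : nat) : Prop :=
  exists s : nat -> nat, s 0%nat = n /\
    forall i, (i < length w)%nat ->
      next_pt alpha Q (s i) (s (S i)) /\
      fwd alpha (s i) (s (S i)) = letter_len alpha a1 q1 a2 q2 (nth i w LA).

Definition count_lt (Q : nat) (P : nat -> Prop) : nat :=
  length (filter (fun n => if excluded_middle_informative (P n) then true else false)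
                 (seq 0 Q)).

(* #{Gamma in G_{Q,k}(alpha) : Gamma = w}: gaps are indexed by their left
   endpoint {n alpha}, 0 <= n < Q. *)
Definition count_word (Q : nat) (alpha : R) (a1 q1 a2 q2 : nat) (w : list letter) : nat :=
  count_lt Q (word_at alpha Q a1 q1 a2 q2 w).

(* Main.v *)
Require Import Defs.
From Stdlib Require Import Reals List Lra Lia ZArith ClassicalEpsilon.
Import ListNotations.
Open Scope R_scope.

Lemma frac_of (p : Z) (e : R) : 0 <= e < 1 -> frac_part (IZR p + e) = e.
Proof.
  intros [H0 H1]. unfold frac_part, Int_part.
  rewrite <- (tech_up (IZR p + e) (p+1)).
  - replace (p+1-1)%Z with p by ring. ring.
  - rewrite plus_IZR; lra.
  - rewrite plus_IZR; lra.
Qed.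

Lemma irr_int alpha d p : irrational alpha -> IZR d * alpha = IZR p -> d = 0%Z.
Proof.
  intros Hi H. destruct (Z.eq_dec d 0) as [|n]; auto. exfalso.
  assert (IZR d <> 0) by (intro E; apply n; apply eq_IZR_R0; auto).
  apply (Hi p d); auto. rewrite <- H. field; auto.
Qed.

Definition good (Q:nat) alpha (a1 q1 a2 q2 : nat) : Prop :=
  (1 <= q1 <= Q-1)%nat /\ (1 <= q2 <= Q-1)%nat /\ (Q <= q1 + q2)%nat /\
  (Z.of_nat a2 * Z.of_nat q1 - Z.of_nat a1 * Z.of_nat q2 = 1)%Z /\
  irrational alpha /\ 0 < INR q1 * alpha - INR a1 /\ 0 < INR a2 - INR q2 * alpha.

Lemma good_det_R Q alpha a1 q1 a2 q2 : good Q alpha a1 q1 a2 q2 ->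
  INR a2 * INR q1 - INR a1 * INR q2 = 1.
Proof.
  intros (_&_&_&D&_). apply (f_equal IZR) in D.
  rewrite minus_IZR, !mult_IZR, <- !INR_IZR_INZ in D. exact D.
Qed.

Lemma good_AB Q alpha a1 q1 a2 q2 : good Q alpha a1 q1 a2 q2 ->
  (INR q1 * alpha - INR a1) * INR q2 < 1 /\ (INR a2 - INR q2 * alpha) * INR q1 < 1.
Proof.
  intros G. pose proof (good_det_R _ _ _ _ _ _ G) as D.
  destruct G as (Hq1&Hq2&_&_&_&HA&HB).
  assert (1 <= INR q1) by (apply (le_INR 1); lia).
  assert (1 <= INR q2) by (apply (le_INR 1); lia).
  split; nra.
Qed.

Lemma decomp Q alpha a1 q1 a2 q2 : good Q alpha a1 q1 a2 q2 ->
  forall d p : Z, exists u v : Z,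
    d = (u * Z.of_nat q1 + v * Z.of_nat q2)%Z /\
    IZR d * alpha - IZR p = IZR u * (INR q1 * alpha - INR a1) - IZR v * (INR a2 - INR q2 * alpha).
Proof.
  intros G d p. pose proof (good_det_R _ _ _ _ _ _ G) as DR.
  destruct G as (_&_&_&D&_).
  exists (d * Z.of_nat a2 - p * Z.of_nat q2)%Z, (p * Z.of_nat q1 - d * Z.of_nat a1)%Z.
  split.
  - transitivity (d * (Z.of_nat a2 * Z.of_nat q1 - Z.of_nat a1 * Z.of_nat q2))%Z.
    + rewrite D; ring.
    + ring.
  - rewrite !minus_IZR, !mult_IZR, <- !INR_IZR_INZ.
    transitivity ((IZR d * alpha - IZR p) * (INR a2 * INR q1 - INR a1 * INR q2)).
    + rewrite DR; ring.
    + ring.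
Qed.

Definition Tn (Q q1 q2 n : nat) : nat :=
  if (n + q1 <? Q)%nat then (n+q1)%nat else if (q2 <=? n)%nat then (n - q2)%nat else (n + q1 - q2)%nat.
Definition labn (Q q1 q2 n : nat) : letter :=
  if (n + q1 <? Q)%nat then LA else if (q2 <=? n)%nat then LB else LC.

Lemma Tn_lt Q a q1 q2 alpha b1 : good Q alpha a q1 b1 q2 -> forall n, (n < Q)%nat -> (Tn Q q1 q2 n < Q)%nat.
Proof.
  intros (H1&H2&H3&_) n Hn. unfold Tn.
  destruct (Nat.ltb_spec (n+q1) Q); [lia|].
  destruct (Nat.leb_spec q2 n); lia.
Qed.

Lemma gap_len Q alpha a1 q1 a2 q2 : good Q alpha a1 q1 a2 q2 -> forall n, (n < Q)%nat ->
  fwd alpha n (Tn Q q1 q2 n) = letter_len alpha a1 q1 a2 q2 (labn Q q1 q2 n).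
Proof.
  intros G n Hn. pose proof (good_AB _ _ _ _ _ _ G) as [HA1 HB1].
  destruct G as (Hq1&Hq2&Hs&_&_&HA&HB).
  unfold fwd, Tn, labn, letter_len.
  destruct (Nat.ltb_spec (n+q1) Q).
  - rewrite plus_INR. replace ((INR n + INR q1 - INR n) * alpha) with
      (IZR (Z.of_nat a1) + (INR q1 * alpha - INR a1)) by (rewrite <- INR_IZR_INZ; ring).
    apply frac_of.
    assert (1 <= INR q2) by (apply (le_INR 1); lia). nra.
  - destruct (Nat.leb_spec q2 n).
    + rewrite minus_INR by lia. replace ((INR n - INR q2 - INR n) * alpha) with
      (IZR (- Z.of_nat a2) + (INR a2 - INR q2 * alpha)) by (rewrite opp_IZR, <- INR_IZR_INZ; ring).
      apply frac_of.
      assert (1 <= INR q1) by (apply (le_INR 1); lia). nra.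
    + rewrite minus_INR by lia. rewrite plus_INR.
      replace ((INR n + INR q1 - INR q2 - INR n) * alpha) with
      (IZR (Z.of_nat a1 - Z.of_nat a2) + ((INR q1 * alpha - INR a1) + (INR a2 - INR q2 * alpha)))
        by (rewrite minus_IZR, <- !INR_IZR_INZ; ring).
      apply frac_of.
      assert (2 <= INR q1) by (apply (le_INR 2); lia).
      assert (2 <= INR q2) by (apply (le_INR 2); lia). nra.
Qed.

Lemma fwd_decomp alpha n m : exists p : Z,
  fwd alpha n m = IZR (Z.of_nat m - Z.of_nat n) * alpha - IZR p.
Proof.
  exists (Int_part ((INR m - INR n) * alpha)). unfold fwd, frac_part.
  rewrite minus_IZR, <- !INR_IZR_INZ. reflexivity.
Qed.

Lemma gap_min Q alpha a1 q1 a2 q2 : good Q alpha a1 q1 a2 q2 -> forall n m, (n < Q)%nat ->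
  (m < Q)%nat -> m <> n -> fwd alpha n (Tn Q q1 q2 n) <= fwd alpha n m.
Proof.
  intros G n m Hn Hm Hmn. rewrite (gap_len _ _ _ _ _ _ G n Hn).
  destruct (base_fp ((INR m - INR n) * alpha)) as [He0 He1].
  fold (fwd alpha n m) in He0, He1.
  destruct (fwd_decomp alpha n m) as [p Hp].
  destruct (decomp _ _ _ _ _ _ G (Z.of_nat m - Z.of_nat n) p) as (u&v&Hd&He).
  rewrite <- Hp in He.
  assert (Hne : fwd alpha n m <> 0).
  { intro E. rewrite E in Hp. destruct G as (_&_&_&_&Hi&_).
    assert (IZR (Z.of_nat m - Z.of_nat n) * alpha = IZR p) by lra.
    apply irr_int in H; auto. lia. }
  destruct G as (Hq1&Hq2&Hs&_&_&HA&HB).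
  set (A := INR q1 * alpha - INR a1) in *.
  set (B := INR a2 - INR q2 * alpha) in *.
  apply Rnot_lt_le. intro Hlt.
  assert (He2 : 0 < IZR u * A - IZR v * B) by lra.
  unfold labn, letter_len in Hlt. fold A B in Hlt.
  destruct (Nat.ltb_spec (n+q1) Q).
  - destruct (Z_le_gt_dec u 0) as [hu|hu].
    + assert (v <= -1)%Z.
      { destruct (Z_le_gt_dec v (-1)); auto. exfalso.
        apply IZR_le in hu. assert (0 <= v)%Z as hv by lia. apply IZR_le in hv. nra. }
      nia.
    + assert (v >= 1)%Z.
      { destruct (Z_le_gt_dec v 0) as [hv|]; [|lia]. exfalso.
        assert (1 <= u)%Z as hu' by lia. apply IZR_le in hu'. apply IZR_le in hv. nra. }
      nia.
  - destruct (Nat.leb_spec q2 n).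
    + destruct (Z_le_gt_dec u 0) as [hu|hu].
      * assert (v <= -1)%Z.
        { destruct (Z_le_gt_dec v (-1)); auto. exfalso.
          apply IZR_le in hu. assert (0 <= v)%Z as hv by lia. apply IZR_le in hv. nra. }
        destruct (Z.eq_dec u 0) as [hu0|hu0].
        -- subst u. exfalso. assert (v + 1 <= 0)%Z as hv by lia. apply IZR_le in hv.
           rewrite plus_IZR in hv. simpl in *. nra.
        -- nia.
      * assert (v >= 0)%Z.
        { destruct (Z_le_gt_dec v (-1)) as [hv|]; [|lia]. exfalso.
          assert (1 <= u)%Z as hu' by lia. apply IZR_le in hu'.
          assert (v + 1 <= 0)%Z as hv' by lia. apply IZR_le in hv'. rewrite plus_IZR in hv'. nra. }
        nia.
    + destruct (Z_le_gt_dec u 0) as [hu|hu]; destruct (Z_le_gt_dec v (-1)) as [hv|hv].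
      * nia.
      * exfalso. apply IZR_le in hu. assert (0 <= v)%Z as hv' by lia. apply IZR_le in hv'. nra.
      * exfalso. assert (1 <= u)%Z as hu' by lia. apply IZR_le in hu'.
        assert (v + 1 <= 0)%Z as hv' by lia. apply IZR_le in hv'. rewrite plus_IZR in hv'. nra.
      * nia.
Qed.

Lemma len_pos Q alpha a1 q1 a2 q2 l : good Q alpha a1 q1 a2 q2 -> 0 < letter_len alpha a1 q1 a2 q2 l.
Proof. intros (_&_&_&_&_&HA&HB). destruct l; simpl; lra. Qed.

Lemma fwd_self alpha n : fwd alpha n n = 0.
Proof.
  unfold fwd. replace ((INR n - INR n) * alpha) with (IZR 0 + 0) by (simpl; ring).
  apply frac_of. lra.
Qed.

Lemma next_Tn Q alpha a1 q1 a2 q2 : good Q alpha a1 q1 a2 q2 -> forall n, (n < Q)%nat ->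
  next_pt alpha Q n (Tn Q q1 q2 n).
Proof.
  intros G n Hn. split; [eapply Tn_lt; eauto|]. split.
  - intro E. pose proof (gap_len _ _ _ _ _ _ G n Hn) as L. rewrite E, fwd_self in L.
    pose proof (len_pos _ _ _ _ _ _ (labn Q q1 q2 n) G). lra.
  - intros m' Hm' Hne. eapply gap_min; eauto.
Qed.

Lemma next_uniq Q alpha a1 q1 a2 q2 : good Q alpha a1 q1 a2 q2 -> forall n m1 m2,
  next_pt alpha Q n m1 -> next_pt alpha Q n m2 -> m1 = m2.
Proof.
  intros G n m1 m2 (H1&H1'&H1'') (H2&H2'&H2'').
  assert (E : fwd alpha n m1 = fwd alpha n m2).
  { apply Rle_antisym; auto. }
  destruct (fwd_decomp alpha n m1) as [p1 P1]. destruct (fwd_decomp alpha n m2) as [p2 P2].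
  rewrite P1, P2 in E.
  assert (IZR (Z.of_nat m1 - Z.of_nat m2) * alpha = IZR (p1 - p2)).
  { rewrite !minus_IZR in *. lra. }
  destruct G as (_&_&_&_&Hi&_). apply irr_int in H; auto. lia.
Qed.

Lemma letter_inj Q alpha a1 q1 a2 q2 : good Q alpha a1 q1 a2 q2 -> forall l1 l2,
  letter_len alpha a1 q1 a2 q2 l1 = letter_len alpha a1 q1 a2 q2 l2 -> l1 = l2.
Proof.
  intros G l1 l2 E. destruct G as (Hq1&Hq2&_&_&Hi&HA&HB).
  assert (AB : INR q1 * alpha - INR a1 <> INR a2 - INR q2 * alpha).
  { intro E'. assert (IZR (Z.of_nat q1 + Z.of_nat q2) * alpha = IZR (Z.of_nat a1 + Z.of_nat a2)).
    { rewrite !plus_IZR, <- !INR_IZR_INZ. lra. }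
    apply irr_int in H; auto. lia. }
  destruct l1, l2; simpl in E; auto; exfalso; try lra.
Qed.

Fixpoint itin (Q q1 q2 : nat) (n : nat) (w : list letter) : Prop :=
  match w with
  | [] => True
  | l :: w' => labn Q q1 q2 n = l /\ itin Q q1 q2 (Tn Q q1 q2 n) w'
  end.

Lemma word_at_iff Q alpha a1 q1 a2 q2 : good Q alpha a1 q1 a2 q2 -> forall w n, (n < Q)%nat ->
  (word_at alpha Q a1 q1 a2 q2 w n <-> itin Q q1 q2 n w).
Proof.
  intros G w. induction w as [|l w IH]; intros n Hn; simpl.
  - split; auto. intros _. exists (fun _ => n). split; auto. simpl; intros; lia.
  - split.
    + intros (s&s0&Hs). destruct (Hs 0%nat) as [Hnx Hf]; [simpl; lia|].
      rewrite s0 in Hnx, Hf.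
      assert (E : s 1%nat = Tn Q q1 q2 n).
      { eapply next_uniq; eauto. eapply next_Tn; eauto. }
      rewrite E, (gap_len _ _ _ _ _ _ G n Hn) in Hf. simpl in Hf.
      split; [eapply letter_inj; eauto|].
      apply IH; [eapply Tn_lt; eauto|].
      exists (fun i => s (S i)). split; auto.
      intros i Hi. apply (Hs (S i)). simpl; lia.
    + intros [Hl Hw]. apply IH in Hw; [|eapply Tn_lt; eauto].
      destruct Hw as (s'&s0&Hs).
      exists (fun i => match i with 0%nat => n | S j => s' j end). split; auto.
      intros [|i] Hi.
      * rewrite s0. split; [eapply next_Tn; eauto|]. rewrite (gap_len _ _ _ _ _ _ G n Hn), Hl. reflexivity.
      * apply Hs. simpl in Hi; lia.
Qed.

Definition loZ (Qz z1 z2 : Z) (l : letter) : Z :=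
  match l with LA => 0 | LC => Qz - z1 | LB => z2 end.
Definition hiZ (Qz z1 z2 : Z) (l : letter) : Z :=
  match l with LA => Qz - z1 | LC => z2 | LB => Qz end.
Definition shZ (Qz z1 z2 : Z) (l : letter) : Z :=
  match l with LA => z1 | LB => - z2 | LC => z1 - z2 end.
Fixpoint LZ Qz z1 z2 (w : list letter) : Z :=
  match w with [] => 0%Z | l :: w' => Z.max (loZ Qz z1 z2 l) (LZ Qz z1 z2 w' - shZ Qz z1 z2 l) end.
Fixpoint UZ Qz z1 z2 (w : list letter) : Z :=
  match w with [] => Qz | l :: w' => Z.min (hiZ Qz z1 z2 l) (UZ Qz z1 z2 w' - shZ Qz z1 z2 l) end.

Lemma lab_iff Q alpha a1 q1 a2 q2 : good Q alpha a1 q1 a2 q2 -> forall n l, (n < Q)%nat ->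
  (labn Q q1 q2 n = l <->
   (loZ (Z.of_nat Q) (Z.of_nat q1) (Z.of_nat q2) l <= Z.of_nat n < hiZ (Z.of_nat Q) (Z.of_nat q1) (Z.of_nat q2) l)%Z).
Proof.
  intros (H1&H2&H3&_) n l Hn. unfold labn.
  destruct (Nat.ltb_spec (n+q1) Q); [|destruct (Nat.leb_spec q2 n)];
  destruct l; simpl; split; intro; try reflexivity; try discriminate; try lia.
Qed.

Lemma Tn_sh Q alpha a1 q1 a2 q2 : good Q alpha a1 q1 a2 q2 -> forall n, (n < Q)%nat ->
  Z.of_nat (Tn Q q1 q2 n) = (Z.of_nat n + shZ (Z.of_nat Q) (Z.of_nat q1) (Z.of_nat q2) (labn Q q1 q2 n))%Z.
Proof.
  intros (H1&H2&H3&_) n Hn. unfold labn, Tn.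
  destruct (Nat.ltb_spec (n+q1) Q); [|destruct (Nat.leb_spec q2 n)]; simpl; lia.
Qed.

Lemma itin_iff Q alpha a1 q1 a2 q2 : good Q alpha a1 q1 a2 q2 -> forall w n, (n < Q)%nat ->
  (itin Q q1 q2 n w <->
   (LZ (Z.of_nat Q) (Z.of_nat q1) (Z.of_nat q2) w <= Z.of_nat n < UZ (Z.of_nat Q) (Z.of_nat q1) (Z.of_nat q2) w)%Z).
Proof.
  intros G w. induction w as [|l w IH]; intros n Hn; simpl.
  - split; auto; lia.
  - pose proof (Tn_lt _ _ _ _ _ _ G n Hn) as HT.
    pose proof (Tn_sh _ _ _ _ _ _ G n Hn) as HS.
    split.
    + intros [Hl Hw]. apply IH in Hw; auto.
      apply (lab_iff _ _ _ _ _ _ G n l Hn) in Hl as Hl'. subst l. lia.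
    + intros Hb. assert (Hl : labn Q q1 q2 n = l).
      { apply (lab_iff _ _ _ _ _ _ G n l Hn). lia. }
      split; auto. apply IH; auto. rewrite Hl in HS. lia.
Qed.

Lemma count_interval (L U : Z) N : (0 <= L)%Z ->
  length (filter (fun n => andb (L <=? Z.of_nat n)%Z (Z.of_nat n <? U)%Z) (seq 0 N))
  = Z.to_nat (Z.min U (Z.of_nat N) - L).
Proof.
  intros HL. induction N as [|N IH].
  - simpl. lia.
  - rewrite seq_S, filter_app, length_app, IH. simpl.
    destruct (Z.leb_spec L (Z.of_nat N)); destruct (Z.ltb_spec (Z.of_nat N) U); simpl; lia.
Qed.

Lemma LZ_ge0 Qz z1 z2 w : (0 <= z1 <= Qz)%Z -> (0 <= z2 <= Qz)%Z -> (0 <= LZ Qz z1 z2 w)%Z.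
Proof. intros H H'; destruct w as [|l w]; simpl; [lia|]. destruct l; simpl; lia. Qed.

Lemma UZ_le Qz z1 z2 w : (0 <= z1 <= Qz)%Z -> (0 <= z2 <= Qz)%Z -> (UZ Qz z1 z2 w <= Qz)%Z.
Proof. intros H H'; destruct w as [|l w]; simpl; [lia|]. destruct l; simpl; lia. Qed.

Lemma count_word_eq Q alpha a1 q1 a2 q2 : good Q alpha a1 q1 a2 q2 -> forall w,
  count_word Q alpha a1 q1 a2 q2 w =
  Z.to_nat (UZ (Z.of_nat Q) (Z.of_nat q1) (Z.of_nat q2) w - LZ (Z.of_nat Q) (Z.of_nat q1) (Z.of_nat q2) w).
Proof.
  intros G w. unfold count_word, count_lt.
  pose proof G as (H1&H2&_).
  rewrite (filter_ext_in _ (fun n => andb (LZ (Z.of_nat Q) (Z.of_nat q1) (Z.of_nat q2) w <=? Z.of_nat n)%Z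
     (Z.of_nat n <? UZ (Z.of_nat Q) (Z.of_nat q1) (Z.of_nat q2) w)%Z)).
  - rewrite count_interval by (apply LZ_ge0; lia).
    pose proof (UZ_le (Z.of_nat Q) (Z.of_nat q1) (Z.of_nat q2) w ltac:(lia) ltac:(lia)). 
    f_equal. lia.
  - intros n Hin. apply in_seq in Hin.
    destruct (ClassicalEpsilon.excluded_middle_informative _) as [Hw|Hw].
    + apply (word_at_iff _ _ _ _ _ _ G) in Hw; [|lia]. apply (itin_iff _ _ _ _ _ _ G) in Hw; [|lia].
      symmetry. apply andb_true_intro; split; [apply Z.leb_le|apply Z.ltb_lt]; lia.
    + symmetry. destruct (Z.leb_spec (LZ (Z.of_nat Q) (Z.of_nat q1) (Z.of_nat q2) w) (Z.of_nat n));
      destruct (Z.ltb_spec (Z.of_nat n) (UZ (Z.of_nat Q) (Z.of_nat q1) (Z.of_nat q2) w)); simpl; auto.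
      exfalso. apply Hw. apply (word_at_iff _ _ _ _ _ _ G); [lia|]. apply (itin_iff _ _ _ _ _ _ G); [lia|]. lia.
Qed.

Lemma div_lt_iff a b q q' : 0 < q -> 0 < q' -> (a/q < b/q' <-> a*q' < b*q).
Proof.
  intros Hq Hq'. assert (0 < q*q') by nra. split; intro H0.
  - assert (E1 : a*q' = (a/q)*(q*q')) by (field; lra).
    assert (E2 : b*q = (b/q')*(q*q')) by (field; lra).
    rewrite E1, E2. apply Rmult_lt_compat_r; auto.
  - assert (E1 : a/q = (a*q') * / (q*q')) by (field; lra).
    assert (E2 : b/q' = (b*q) * /(q*q')) by (field; lra).
    rewrite E1, E2. apply Rmult_lt_compat_r; auto. apply Rinv_0_lt_compat; auto.
Qed.

Lemma INR_Z n : INR n = IZR (Z.of_nat n).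
Proof. apply INR_IZR_INZ. Qed.

Lemma farey_good Q alpha a1 q1 a2 q2 : (2 <= Q)%nat -> irrational alpha ->
  farey_consec Q alpha a1 q1 a2 q2 -> good Q alpha a1 q1 a2 q2.
Proof.
  intros HQ Hi (Hq1&Hq2&Ha1&Ha2&G1&G2&[L1 L2]&NB).
  assert (P1 : 0 < INR q1) by (apply lt_0_INR; lia).
  assert (P2 : 0 < INR q2) by (apply lt_0_INR; lia).
  assert (HA : 0 < INR q1 * alpha - INR a1).
  { replace alpha with (alpha / 1) in L1 by field.
    apply (div_lt_iff (INR a1) alpha (INR q1) 1) in L1; lra. }
  assert (HB : 0 < INR a2 - INR q2 * alpha).
  { replace alpha with (alpha / 1) in L2 by field.
    apply (div_lt_iff alpha (INR a2) 1 (INR q2)) in L2; lra. }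
  assert (D3 : (Z.of_nat a1 * Z.of_nat q2 < Z.of_nat a2 * Z.of_nat q1)%Z).
  { assert (INR a1 / INR q1 < INR a2 / INR q2) by lra.
    apply (div_lt_iff (INR a1) (INR a2) (INR q1) (INR q2)) in H; auto. rewrite !INR_Z in H. rewrite <- !mult_IZR in H.
    apply lt_IZR in H. lia. }
  assert (D4 : (Q <= q1 + q2)%nat).
  { destruct (Nat.le_gt_cases Q (q1+q2)) as [|Hlt]; auto. exfalso.
    apply (NB (a1+a2)%nat (q1+q2)%nat); [lia|].
    rewrite !plus_INR. split; (rewrite div_lt_iff; [|lra|lra]);
    rewrite !INR_Z; rewrite <- !plus_IZR, <- !mult_IZR; apply IZR_lt; lia. }
  destruct (Nat.gcd_bezout_pos q1 a1 ltac:(lia)) as (x&y&Hxy).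
  rewrite Nat.gcd_comm, G1 in Hxy.
  set (z1 := Z.of_nat q1). set (z2 := Z.of_nat q2). set (b1 := Z.of_nat a1). set (b2 := Z.of_nat a2).
  set (X := Z.of_nat x). set (Y := Z.of_nat y).
  assert (HB1 : (X * z1 = 1 + Y * b1)%Z) by (unfold X, z1, Y, b1; lia).
  set (t := ((Z.of_nat Q - 1 - Y) / z1)%Z).
  set (r := ((Z.of_nat Q - 1 - Y) mod z1)%Z).
  assert (Hdm : (Z.of_nat Q - 1 - Y = z1 * t + r)%Z) by (apply Z.div_mod; unfold z1; lia).
  assert (Hr : (0 <= r < z1)%Z) by (apply Z.mod_pos_bound; unfold z1; lia).
  set (q' := (Y + t * z1)%Z). set (p' := (X + t * b1)%Z).
  assert (Hpq : (z1 * p' - b1 * q' = 1)%Z) by (unfold p', q'; lia).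
  assert (Hq' : (Z.of_nat Q - z1 <= q' <= Z.of_nat Q - 1)%Z) by (unfold q'; lia).
  assert (Hz1 : (1 <= z1 <= Z.of_nat Q - 1)%Z) by (unfold z1; lia).
  assert (Hz2 : (1 <= z2 <= Z.of_nat Q - 1)%Z) by (unfold z2; lia).
  assert (Hb1 : (0 <= b1)%Z) by (unfold b1; lia).
  assert (Hp' : (1 <= p')%Z) by nia.
  assert (Hle : (b2 * q' <= p' * z2)%Z).
  { destruct (Z_le_gt_dec (b2 * q') (p' * z2)) as [|Hgt]; auto. exfalso.
    apply (NB (Z.to_nat p') (Z.to_nat q')); [lia|].
    rewrite !INR_Z, !Z2Nat.id by lia. fold z1 z2 b1 b2.
    assert (0 < IZR q') by (apply IZR_lt; lia).
    assert (0 < IZR z1) by (apply IZR_lt; lia).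
    assert (0 < IZR z2) by (apply IZR_lt; lia).
    split; (rewrite div_lt_iff; [|auto|auto]); rewrite <- !mult_IZR; apply IZR_lt; lia. }
  set (D := (b2 * z1 - b1 * z2)%Z).
  assert (HX : (z1 * (p' * z2 - b2 * q') = z2 - q' * D)%Z) by (unfold D; nia).
  assert (HD : D = 1%Z).
  { destruct (Z.eq_dec (p' * z2 - b2 * q') 0) as [H0|H0].
    - rewrite H0 in HX.
      assert (Eq2 : z2 = (q' * D)%Z) by lia.
      assert (Ea2 : b2 = (p' * D)%Z).
      { apply (Z.mul_cancel_l _ _ q'); [lia|]. nia. }
      assert (HD0 : (0 <= D)%Z) by (unfold D; lia).
      assert (Nat.divide (Z.to_nat D) (Nat.gcd a2 q2)).
      { apply Nat.gcd_greatest.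
        - exists (Z.to_nat p'). apply Nat2Z.inj. rewrite Nat2Z.inj_mul, !Z2Nat.id by lia.
          fold b2. lia.
        - exists (Z.to_nat q'). apply Nat2Z.inj. rewrite Nat2Z.inj_mul, !Z2Nat.id by lia.
          fold z2. lia. }
      rewrite G2 in H. apply Nat.divide_1_r in H. lia.
    - exfalso. unfold D in HX. nia. }
  unfold good. repeat split; try lia; auto.
Qed.

Definition lor x y (l : letter) : R := match l with LA => 0 | LC => 1 - x | LB => y end.
Definition hir x y (l : letter) : R := match l with LA => 1 - x | LC => y | LB => 1 end.
Definition shr x y (l : letter) : R := match l with LA => x | LB => - y | LC => x - y end.
Fixpoint Lr x y (w : list letter) : R :=
  match w with [] => 0 | l :: w' => Rmax (lor x y l) (Lr x y w' - shr x y l) end.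
Fixpoint Ur x y (w : list letter) : R :=
  match w with [] => 1 | l :: w' => Rmin (hir x y l) (Ur x y w' - shr x y l) end.
Definition fw (w : list letter) (x y : R) : R := Rmax 0 (Ur x y w - Lr x y w).

Lemma IZR_max a b : IZR (Z.max a b) = Rmax (IZR a) (IZR b).
Proof.
  destruct (Z.le_ge_cases a b) as [H|H].
  - rewrite Z.max_r by auto. rewrite Rmax_right; auto. apply IZR_le; auto.
  - rewrite Z.max_l by lia. rewrite Rmax_left; auto. apply IZR_le; lia.
Qed.
Lemma IZR_min a b : IZR (Z.min a b) = Rmin (IZR a) (IZR b).
Proof.
  destruct (Z.le_ge_cases a b) as [H|H].
  - rewrite Z.min_l by auto. rewrite Rmin_left; auto. apply IZR_le; auto.
  - rewrite Z.min_r by lia. rewrite Rmin_right; auto. apply IZR_le; lia.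
Qed.
Lemma Rmax_scale c a b : 0 < c -> Rmax (c*a) (c*b) = c * Rmax a b.
Proof. intros; unfold Rmax; destruct (Rle_dec (c*a) (c*b)); destruct (Rle_dec a b); nra. Qed.
Lemma Rmin_scale c a b : 0 < c -> Rmin (c*a) (c*b) = c * Rmin a b.
Proof. intros; unfold Rmin; destruct (Rle_dec (c*a) (c*b)); destruct (Rle_dec a b); nra. Qed.

Lemma scale_LU (Qz z1 z2 : Z) w : (0 < Qz)%Z ->
  IZR (LZ Qz z1 z2 w) = IZR Qz * Lr (IZR z1 / IZR Qz) (IZR z2 / IZR Qz) w /\
  IZR (UZ Qz z1 z2 w) = IZR Qz * Ur (IZR z1 / IZR Qz) (IZR z2 / IZR Qz) w.
Proof.
  intros HQ. assert (P : 0 < IZR Qz) by (apply IZR_lt; auto).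
  induction w as [|l w [IL IU]]; simpl.
  - split; ring.
  - rewrite IZR_max, IZR_min, !minus_IZR, IL, IU. split.
    + rewrite <- Rmax_scale by auto. f_equal; destruct l; simpl; rewrite ?minus_IZR, ?opp_IZR; field; lra.
    + rewrite <- Rmin_scale by auto. f_equal; destruct l; simpl; rewrite ?minus_IZR, ?opp_IZR; field; lra.
Qed.

Lemma INR_to_nat z : INR (Z.to_nat z) = Rmax 0 (IZR z).
Proof.
  destruct (Z_le_gt_dec 0 z).
  - rewrite INR_IZR_INZ, Z2Nat.id by auto. rewrite Rmax_right; auto. apply IZR_le in l; auto.
  - replace (Z.to_nat z) with 0%nat by lia. rewrite Rmax_left; simpl; auto.
    assert (z < 0)%Z as g2 by lia. apply IZR_lt in g2. lra.
Qed.

Lemma max_lip a b a' b' c : Rabs (a' - a) <= c -> Rabs (b' - b) <= c -> Rabs (Rmax a' b' - Rmax a b) <= c.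
Proof.
  intros H1 H2. unfold Rmax; destruct (Rle_dec a' b'); destruct (Rle_dec a b);
  unfold Rabs in *; repeat destruct Rcase_abs; lra.
Qed.
Lemma min_lip a b a' b' c : Rabs (a' - a) <= c -> Rabs (b' - b) <= c -> Rabs (Rmin a' b' - Rmin a b) <= c.
Proof.
  intros H1 H2. unfold Rmin; destruct (Rle_dec a' b'); destruct (Rle_dec a b);
  unfold Rabs in *; repeat destruct Rcase_abs; lra.
Qed.

Lemma comp_lip (g : R -> R -> letter -> R) l x y x' y' :
  (g = lor \/ g = hir \/ g = shr) ->
  Rabs (g x' y' l - g x y l) <= Rabs (x' - x) + Rabs (y' - y).
Proof.
  intros [ -> | [ -> | -> ] ]; destruct l; simpl; unfold Rabs; repeat destruct Rcase_abs; lra.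
Qed.

Lemma LU_lip w x y x' y' :
  Rabs (Lr x' y' w - Lr x y w) <= INR (length w) * (Rabs (x' - x) + Rabs (y' - y)) /\
  Rabs (Ur x' y' w - Ur x y w) <= INR (length w) * (Rabs (x' - x) + Rabs (y' - y)).
Proof.
  set (S := Rabs (x' - x) + Rabs (y' - y)).
  assert (HS : 0 <= S) by (unfold S; pose proof (Rabs_pos (x'-x)); pose proof (Rabs_pos (y'-y)); lra).
  induction w as [|l w [IL IU]]; simpl length; rewrite ?S_INR.
  - simpl. rewrite !Rminus_diag, Rabs_R0. lra.
  - pose proof (pos_INR (length w)).
    pose proof (comp_lip shr l x y x' y' ltac:(auto)) as Hsh. fold S in Hsh.
    split; simpl.
    + apply max_lip.
      * pose proof (comp_lip lor l x y x' y' ltac:(auto)). fold S in H0. nra.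
      * replace (Lr x' y' w - shr x' y' l - (Lr x y w - shr x y l)) with
          ((Lr x' y' w - Lr x y w) + - (shr x' y' l - shr x y l)) by ring.
        eapply Rle_trans; [apply Rabs_triang|]. rewrite Rabs_Ropp. nra.
    + apply min_lip.
      * pose proof (comp_lip hir l x y x' y' ltac:(auto)). fold S in H0. nra.
      * replace (Ur x' y' w - shr x' y' l - (Ur x y w - shr x y l)) with
          ((Ur x' y' w - Ur x y w) + - (shr x' y' l - shr x y l)) by ring.
        eapply Rle_trans; [apply Rabs_triang|]. rewrite Rabs_Ropp. nra.
Qed.

Lemma fw_cont w : continuous_on_T (fw w).
Proof.
  intros x y _ eps Heps.
  set (K := 2 * INR (length w)).
  assert (HK : 0 <= K) by (unfold K; pose proof (pos_INR (length w)); lra).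
  exists (eps / (2 * (K + 1))). split.
  { apply Rdiv_lt_0_compat; lra. }
  intros x' y' _ Hx Hy.
  destruct (LU_lip w x y x' y') as [HL HU].
  set (S := Rabs (x' - x) + Rabs (y' - y)) in *.
  assert (HS : S < 2 * (eps / (2 * (K + 1)))) by (unfold S; lra).
  assert (E : 2 * (eps / (2 * (K + 1))) * (K + 1) = eps) by (field; lra).
  assert (HS0 : 0 <= S) by (unfold S; pose proof (Rabs_pos (x'-x)); pose proof (Rabs_pos (y'-y)); lra).
  unfold fw. eapply Rle_lt_trans.
  - apply max_lip with (c := K * S).
    + rewrite Rminus_diag, Rabs_R0. nra.
    + replace (Ur x' y' w - Lr x' y' w - (Ur x y w - Lr x y w)) with
        ((Ur x' y' w - Ur x y w) + - (Lr x' y' w - Lr x y w)) by ring.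
      eapply Rle_trans; [apply Rabs_triang|]. rewrite Rabs_Ropp. unfold K. lra.
  - set (d := eps / (2 * (K + 1))) in *. nra.
Qed.

Theorem lemma3 :
  forall (k : nat), (1 <= k)%nat ->
  forall w : list letter, length w = k ->
  exists f : R -> R -> R,
    continuous_on_T f /\
    (forall x y, inT x y -> 0 <= f x y <= 1) /\
    (forall (Q : nat) (alpha : R) (a1 q1 a2 q2 : nat),
        (2 <= Q)%nat -> irrational alpha -> 0 < alpha < 1 ->
        farey_consec Q alpha a1 q1 a2 q2 ->
        INR (count_word Q alpha a1 q1 a2 q2 w) / INR Q
          = f (INR q1 / INR Q) (INR q2 / INR Q)) /\
    (w = [LA] -> forall x y, inT x y -> f x y = 1 - x) /\
    (w = [LB] -> forall x y, inT x y -> f x y = 1 - y) /\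
    (w = [LC] -> forall x y, inT x y -> f x y = x + y - 1).
Proof.
  intros k Hk w Hw. exists (fw w). split; [apply fw_cont|]. split; [|split; [|split; [|split]]].
  - intros x y (Hx&Hy&Hxy). destruct w as [|l w']; [simpl in Hw; lia|].
    unfold fw. simpl.
    assert (H1 : Rmin (hir x y l) (Ur x y w' - shr x y l) <= hir x y l) by apply Rmin_l.
    assert (H2 : lor x y l <= Rmax (lor x y l) (Lr x y w' - shr x y l)) by apply Rmax_l.
    assert (H3 : hir x y l - lor x y l <= 1) by (destruct l; simpl; lra).
    split; [apply Rmax_l|]. unfold Rmax at 1; destruct Rle_dec; lra.
  - intros Q alpha a1 q1 a2 q2 HQ Hi Ha HF.
    pose proof (farey_good _ _ _ _ _ _ HQ Hi HF) as G.
    rewrite (count_word_eq _ _ _ _ _ _ G w), INR_to_nat, minus_IZR.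
    destruct (scale_LU (Z.of_nat Q) (Z.of_nat q1) (Z.of_nat q2) w ltac:(lia)) as [EL EU].
    rewrite EL, EU, <- !INR_IZR_INZ.
    assert (P : 0 < INR Q) by (apply lt_0_INR; lia).
    unfold fw.
    replace (INR Q * Ur (INR q1 / INR Q) (INR q2 / INR Q) w - INR Q * Lr (INR q1 / INR Q) (INR q2 / INR Q) w)
      with (INR Q * (Ur (INR q1 / INR Q) (INR q2 / INR Q) w - Lr (INR q1 / INR Q) (INR q2 / INR Q) w)) by ring.
    rewrite <- (Rmult_0_r (INR Q)) at 1. rewrite Rmax_scale by auto. field. lra.
  - intros -> x y (Hx&Hy&Hxy). unfold fw; simpl. unfold Rmax, Rmin; repeat destruct Rle_dec; lra.
  - intros -> x y (Hx&Hy&Hxy). unfold fw; simpl. unfold Rmax, Rmin; repeat destruct Rle_dec; lra.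
  - intros -> x y (Hx&Hy&Hxy). unfold fw; simpl. unfold Rmax, Rmin; repeat destruct Rle_dec; lra.
Qed.
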